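(* For $i\in\{0,1\}$, let $N_i\subseteq W({\rm G}_2)$ be the stabilizer of $\beta_i$ under the action of $W({\rm G}_2)$ on $\Psi^+$, and let $D_i$ be a set of left coset representatives for $N_i$ in $W({\rm G}_2)$. Let $K_0=\{1\}\subseteq N_0$ and let $K_1\subseteq N_1$ be the subgroup generated by $r_0r_1r_0r_1r_0$. Then for every $r\in W({\rm G}_2)$ and $i\in\{0,1\}$ there exist $a\in D_i$ and $b\in K_i$ such that $re_i=ae_ib$ in ${\rm Br}({\rm G}_2)$.
   Context: Let $\delta$ be an indeterminate. ${\rm Br}({\rm G}_2)$ is the $\mathbb{Z}[\delta^{\pm1}]$-algebra generated by $r_0,r_1,e_0,e_1$ subject to the following relations: - $r_0^2=r_1^2=1$; - $r_ie_i=e_ir_i=e_i$ for $i=0,1$; - $e_0^2=\delta^3e_0$ and $e_1^2=\delta e_1$; - $r_0e_1e_0=r_1e_0$ and $e_0e_1r_0=e_0r_1$; - $e_1r_0e_1r_0e_1=e_1$ and $e_1r_0e_1r_0r_1=e_1r_0r_1r_0$; - $e_0r_1e_0=\delta^2e_0$; - $r_1r_0e_1r_0e_1=r_0r_1r_0e_1$; - $(r_1r_0)^6=1$. Let $\Psi$ be a root system of type ${\rm G}_2$ with simple roots $\beta_0$ (short) and $\beta_1$ (long), and positive roots $\Psi^+$. $W({\rm G}_2)$ is generated by the reflections $s_0,s_1$ in $\beta_0,\beta_1$. It acts on $\Psi^+$ by $w\cdot\beta=$ the unique element of $\Psi^+\cap\{\pm w\beta\}$. The subgroup of units of ${\rm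 Br}({\rm G}_2)$ generated by $r_0,r_1$ is isomorphic to $W({\rm G}_2)$ via $r_i\mapsto s_i$. Elements of $W({\rm G}_2)$ are identified with their images in ${\rm Br}({\rm G}_2)$. *)

(* Defs.v *)
From HB Require Import structures.
From mathcomp Require Import all_boot all_order all_algebra all_fingroup.
Set Implicit Arguments. Unset Strict Implicit. Unset Printing Implicit Defensive.
Import GRing.Theory.

(* The root system Psi of type G2.  A root x*beta0 + y*beta1 is coded   *)
(* by its coordinates (x, y) in the basis of simple roots; beta0 is the *)
(* short simple root, beta1 the long one.                               *)
Definition vec := (int * int)%type.

Local Open Scope ring_scope.

Definition G2pos : seq vec :=
  [:: (1, 0); (0, 1); (1, 1); (2, 1); (3, 1); (3, 2)].
Definition vneg (v : vec) : vec := (- v.1, - v.2).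
Definition G2roots : seq vec := G2pos ++ map vneg G2pos.

(* Simple reflections (Cartan integers <beta1,beta0^v> = -3,
   <beta0,beta1^v> = -1):  s0 b0 = -b0, s0 b1 = b1 + 3 b0;
   s1 b1 = -b1, s1 b0 = b0 + b1. *)
Definition s0v (v : vec) : vec := (- v.1 + 3 * v.2, v.2).
Definition s1v (v : vec) : vec := (v.1, v.1 - v.2).

Lemma s0v_invol v : s0v (s0v v) = v.
Proof. by case: v => x y; rewrite /s0v /=; congr pair; rewrite opprD opprK subrK. Qed.
Lemma s1v_invol v : s1v (s1v v) = v.
Proof. by case: v => x y; rewrite /s1v /=; congr pair; rewrite opprB addrC subrK. Qed.

Definition G2root := seq_sub G2roots.

Lemma s0v_closed : all (fun v => s0v v \in G2roots) G2roots. Proof. by []. Qed.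
Lemma s1v_closed : all (fun v => s1v v \in G2roots) G2roots. Proof. by []. Qed.
Lemma vneg_closed : all (fun v => vneg v \in G2roots) G2roots. Proof. by []. Qed.

Definition s0r (x : G2root) : G2root :=
  SeqSub (allP s0v_closed _ (ssvalP x)).
Definition s1r (x : G2root) : G2root :=
  SeqSub (allP s1v_closed _ (ssvalP x)).
Definition negr (x : G2root) : G2root :=
  SeqSub (allP vneg_closed _ (ssvalP x)).

Lemma s0rK : involutive s0r.
Proof. by move=> x; apply: val_inj; rewrite /= s0v_invol. Qed.
Lemma s1rK : involutive s1r.
Proof. by move=> x; apply: val_inj; rewrite /= s1v_invol. Qed.

Definition s0 : {perm G2root} := perm (can_inj s0rK).
Definition s1 : {perm G2root} := perm (can_inj s1rK).

(* CONVENTION: MathComp's product of permutations is (p * q) x = q (p x),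
   i.e. p * q is the composite "q after p".  The underlying set of the
   generated group is the same as for composition. *)
Definition WG2 : {group {perm G2root}} := <<[set s0; s1]>>%G.

Lemma beta0_in : ((1, 0) : vec) \in G2roots. Proof. by []. Qed.
Lemma beta1_in : ((0, 1) : vec) \in G2roots. Proof. by []. Qed.
Definition beta0 : G2root := SeqSub beta0_in.
Definition beta1 : G2root := SeqSub beta1_in.
(* index i : bool, false = 0, true = 1 *)
Definition beta (i : bool) : G2root := if i then beta1 else beta0.

Definition pact (w : {perm G2root}) (b : G2root) : G2root :=
  if ssval (w b) \in G2pos then w b else negr (w b).

Definition Nstab (i : bool) : {set {perm G2root}} :=
  [set w in WG2 | pact w (beta i) == beta i].

(* With MathComp's product convention, the set
   { a o n | n in N } is  N :* a = [set n * a | n in N], so the left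
   cosets (for composition) are the elements of  rcosets N WG2. *)
Definition left_coset_reps (D N : {set {perm G2root}}) : bool :=
  is_transversal D (rcosets N WG2) WG2.

(* Words in the generators: false = r0 (resp. s0), true = r1 (resp. s1).
   wordW w is the composite map  g(x1) o g(x2) o ... o g(xn)
   for w = [:: x1; ...; xn]. *)
Definition gen (x : bool) : {perm G2root} := if x then s1 else s0.
Fixpoint wordW (w : seq bool) : {perm G2root} :=
  if w is x :: w' then (wordW w' * gen x)%g else 1%g.

Definition Kgrp (i : bool) : {set {perm G2root}} :=
  if i then <[wordW [:: false; true; false; true; false]]>%g else [1 {perm G2root}]%g.

(* The algebra Br(G2).  A Z[delta^{+-1}]-algebra is a (unital,         *)
(* associative) ring A together with a central unit (the image of       *)
(* delta).  A "model" of Br(G2) in A is such a central unit together    *)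
(* with elements r0 r1 e0 e1 of A satisfying the defining relations.     *)
(* Br(G2) is the universal model, so an identity between words holds    *)
(* in Br(G2) iff it holds in every model.                               *)
Record BrG2model (A : pzRingType) := BrG2Model {
  dl : A; dlinv : A; r0 : A; r1 : A; e0 : A; e1 : A;
  dl_unitl : dl * dlinv = 1;
  dl_unitr : dlinv * dl = 1;
  dl_central : forall x : A, dl * x = x * dl;
  rel_r0r0 : r0 * r0 = 1;
  rel_r1r1 : r1 * r1 = 1;
  rel_r0e0 : r0 * e0 = e0;
  rel_e0r0 : e0 * r0 = e0;
  rel_r1e1 : r1 * e1 = e1;
  rel_e1r1 : e1 * r1 = e1;
  rel_e0e0 : e0 * e0 = dl ^+ 3 * e0;
  rel_e1e1 : e1 * e1 = dl * e1;
  rel_r0e1e0 : r0 * e1 * e0 = r1 * e0;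
  rel_e0e1r0 : e0 * e1 * r0 = e0 * r1;
  rel_e1r0e1r0e1 : e1 * r0 * e1 * r0 * e1 = e1;
  rel_e1r0e1r0r1 : e1 * r0 * e1 * r0 * r1 = e1 * r0 * r1 * r0;
  rel_e0r1e0 : e0 * r1 * e0 = dl ^+ 2 * e0;
  rel_r1r0e1r0e1 : r1 * r0 * e1 * r0 * e1 = r0 * r1 * r0 * e1;
  rel_braid : (r1 * r0) ^+ 6 = 1
}.

Definition egen (A : pzRingType) (M : BrG2model A) (i : bool) : A :=
  if i then e1 M else e0 M.
Definition rgen (A : pzRingType) (M : BrG2model A) (x : bool) : A :=
  if x then r1 M else r0 M.
Definition evalw (A : pzRingType) (M : BrG2model A) (w : seq bool) : A :=
  foldr (fun x acc => rgen M x * acc) 1 w.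

(* Main.v *)
Require Import Defs.
From HB Require Import structures.
From mathcomp Require Import all_boot all_order all_algebra all_fingroup.
Import GRing.Theory.
Local Open Scope ring_scope.
Definition lmul (x : bool) (s : nat * bool) : nat * bool := ((5 * (s.1 + x)) %% 6, ~~ s.2)%N.
Definition nf (w : seq bool) := foldr lmul (0%N, false) w.
Fixpoint cw (k : nat) : seq bool := if k is k'.+1 then [:: false, true & cw k'] else [::].
Definition nfw (s : nat*bool) := cw s.1 ++ (if s.2 then [:: false] else [::]).

Section Alg.
Variables (A : pzRingType) (M : BrG2model A).
Local Notation r0 := (r0 M). Local Notation r1 := (r1 M).
Local Notation c := (r0 * r1). Local Notation d := (r1 * r0).
Definition F (f : bool) : A := if f then r0 else 1.

Lemma evalw_cat u v : evalw M (u ++ v) = evalw M u * evalw M v.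
Proof. elim: u => [|x u IH]; first by rewrite /= mul1r. by rewrite /= IH mulrA. Qed.
Lemma evalw_cw k : evalw M (cw k) = c ^+ k.
Proof. elim: k => [|k IHk]; first by []. by rewrite /= IHk exprS !mulrA. Qed.
Lemma evalw_nfw s : evalw M (nfw s) = c ^+ s.1 * F s.2.
Proof. by rewrite /nfw evalw_cat evalw_cw; case: s.2 => //=; rewrite mulr1. Qed.
Lemma conjM x y : r0 * (x * y) * r0 = (r0 * x * r0) * (r0 * y * r0).
Proof. by rewrite -!mulrA [r0 * (r0 * _)]mulrA rel_r0r0 mul1r. Qed.
Lemma conjk k : r0 * c ^+ k * r0 = d ^+ k.
Proof.
elim: k => [|k IH]; first by rewrite expr0 mulr1 rel_r0r0.
rewrite exprSr conjM IH exprSr; congr (_ * _); by rewrite mulrA rel_r0r0 mul1r.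
Qed.
Lemma c6 : c ^+ 6 = 1.
Proof.
have E: forall x, x = r0 * (r0 * x * r0) * r0.
  by move=> x; rewrite !mulrA rel_r0r0 mul1r -mulrA rel_r0r0 mulr1.
by rewrite [c ^+ 6]E conjk rel_braid mulr1 rel_r0r0.
Qed.
Lemma cd : c * d = 1.
Proof. by rewrite -mulrA [r1 * (r1 * r0)]mulrA rel_r1r1 mul1r rel_r0r0. Qed.
Lemma d5 : d = c ^+ 5.
Proof. by rewrite -[c ^+ 5]mulr1 -cd mulrA -exprSr c6 mul1r. Qed.
Lemma cmod k : c ^+ k = c ^+ (k %% 6).
Proof. by rewrite {1}(divn_eq k 6) mulnC exprD exprM c6 expr1n mul1r. Qed.
Lemma r0c k : r0 * c ^+ k = c ^+ (5 * k) * r0.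
Proof.
by rewrite -[r0 * _]mulr1 -(rel_r0r0 M) mulrA conjk d5 -exprM.
Qed.
Lemma rgenE x : rgen M x = r0 * c ^+ x.
Proof. by case: x; rewrite /= ?expr1 ?expr0 ?mulr1 // mulrA rel_r0r0 mul1r. Qed.
Lemma stepA x s : rgen M x * (c ^+ s.1 * F s.2) = c ^+ (lmul x s).1 * F (lmul x s).2.
Proof.
case: s => k f /=; rewrite rgenE -mulrA [c ^+ x * _]mulrA -exprD mulrA r0c -cmod addnC -mulrA.
by congr (_ * _); case: f; rewrite /F /= ?mulr1 ?rel_r0r0.
Qed.
Lemma evalw_nf w : evalw M w = evalw M (nfw (nf w)).
Proof.
elim: w => [|x w IH]; first by [].
by rewrite [LHS]/= IH !evalw_nfw stepA.
Qed.
Lemma nf_eq u v : nf u = nf v -> evalw M u = evalw M v.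
Proof. by move=> H; rewrite evalw_nf H -evalw_nf. Qed.
Local Notation e0 := (e0 M). Local Notation e1 := (e1 M).
Lemma h1 : r1 * e0 = r0 * (e1 * e0). Proof. by rewrite mulrA rel_r0e1e0. Qed.
Lemma r0K x : r0 * (r0 * x) = x. Proof. by rewrite mulrA rel_r0r0 mul1r. Qed.
Lemma r1K x : r1 * (r1 * x) = x. Proof. by rewrite mulrA rel_r1r1 mul1r. Qed.
Lemma r1e1 x : r1 * (e1 * x) = e1 * x. Proof. by rewrite mulrA rel_r1e1. Qed.
Lemma g1x x : r0 * (r1 * (r0 * (e1 * x))) = r1 * (r0 * (e1 * (r0 * (e1 * x)))).
Proof. by rewrite !mulrA rel_r1r0e1r0e1. Qed.
Lemma g2x x : e1 * (r0 * (e1 * (r0 * (r1 * x)))) = e1 * (r0 * (r1 * (r0 * x))).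
Proof. by rewrite !mulrA rel_e1r0e1r0r1. Qed.
End Alg.

Definition list12 : seq (nat*bool) := [seq (k, f) | k <- iota 0 6, f <- [:: false; true]].
Definition gv (x : bool) := if x then s1v else s0v.
Fixpoint wv (w : seq bool) (v : vec) : vec := if w is x :: w' then gv x (wv w' v) else v.
Lemma step_chk : all (fun s => all (fun x => all (fun v => wv (x :: nfw s) v == wv (nfw (lmul x s)) v) G2roots) [:: false; true]) list12.
Proof. by vm_compute. Qed.
Definition key s := (wv (nfw s) (1,0), wv (nfw s) (0,1)).
Lemma key_chk : all (fun s => all (fun t => (key s == key t) ==> (s == t)) list12) list12.
Proof. by vm_compute. Qed.

Lemma wordW_val w y : ssval (wordW w y) = wv w (ssval y).
Proof.
elim: w => [|x w IH]; first by rewrite /= perm1.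
by rewrite /= permM; case: x; rewrite /= permE /= IH.
Qed.
Lemma perm_wv u v : all (fun z => wv u z == wv v z) G2roots -> wordW u = wordW v.
Proof.
move=> H; apply/permP => y; apply: val_inj; rewrite /= !wordW_val.
by apply/eqP; apply: (allP H); exact: ssvalP.
Qed.
Lemma mem12 k b : (k < 6)%N -> (k, b) \in list12.
Proof. by case: k => [|[|[|[|[|[|k]]]]]] //; case: b. Qed.
Lemma nf_in w : nf w \in list12.
Proof. by case: w => [|x w] //=; apply: mem12; apply: ltn_pmod. Qed.
Lemma wordW_nf w : wordW w = wordW (nfw (nf w)).
Proof.
elim: w => [|x w IH]; first by [].
rewrite [LHS]/= IH.
have := allP step_chk _ (nf_in w) => /allP /(_ x).
by rewrite !inE; case: x => /(_ isT) /perm_wv.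
Qed.
Lemma nfw_inj s t : s \in list12 -> t \in list12 -> wordW (nfw s) = wordW (nfw t) -> s = t.
Proof.
move=> hs ht E.
have K : key s = key t.
  rewrite /key -(wordW_val _ beta0) -(wordW_val _ beta1) E.
  by rewrite !wordW_val.
by apply/eqP; move: (allP (allP key_chk _ hs) _ ht); rewrite K eqxx.
Qed.
Lemma wordW_cat u v : wordW (u ++ v) = (wordW v * wordW u)%g.
Proof.
elim: u => [|x u IH]; first by rewrite /= mulg1.
by rewrite /= IH mulgA.
Qed.
Lemma wordW_in w : wordW w \in WG2.
Proof.
elim: w => [|x w IH]; first exact: group1.
rewrite /= groupM // mem_gen //; case: x; by rewrite !inE eqxx ?orbT.
Qed.
Lemma WG2_word x : x \in WG2 -> exists a, wordW a = x.
Proof.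
move=> /gen_prodgP [n [c Hc ->]].
elim: n c Hc => [|n IH] c Hc; first by exists [::]; rewrite big_ord0.
rewrite big_ord_recr /=.
have [a Ha] := IH (fun i => c (widen_ord (leqnSn n) i)) (fun i => Hc _).
have := Hc ord_max; rewrite !inE => /orP [] /eqP ->.
- by exists (false :: a); rewrite /= Ha.
- by exists (true :: a); rewrite /= Ha.
Qed.
Lemma pact_val w b : ssval (pact w b) = if ssval (w b) \in G2pos then ssval (w b) else vneg (ssval (w b)).
Proof. by rewrite /pact; case: ifP. Qed.

Lemma case_lemma m i : pact (wordW m) (beta i) == beta i ->
  exists b, wordW b \in Kgrp i /\ forall (A : pzRingType) (M : BrG2model A),
     evalw M m * egen M i * evalw M b = egen M i.
Proof.
move=> H.
suff [b [Hb E]] : exists b, wordW b \in Kgrp i /\ forall (A : pzRingType) (M : BrG2model A),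
     evalw M (nfw (nf m)) * egen M i * evalw M b = egen M i.
  by exists b; split => // A M; rewrite evalw_nf; exact: E.
rewrite wordW_nf in H; move/eqP/(congr1 (@ssval _ G2roots)): H; rewrite pact_val !wordW_val.
have : ((nf m).1 < 6)%N by case: m => [|x m] //=; apply: ltn_pmod.
case: (nf m) => k f /= hk.
case: k hk => [|[|[|[|[|[|k]]]]]] // _; case: f; case: i => H;
  try (exfalso; move/eqP: H; by vm_compute).
- exists [::]; split; first by rewrite /= inE.
  by move=> A M; rewrite /= !mulr1 rel_r0e0.
- exists [::]; split; first exact: group1.
  by move=> A M; rewrite /= mulr1 mul1r.
- exists [::]; split; first by rewrite /= inE.
  by move=> A M; rewrite /= mulr1 mul1r.
- exists [:: false; true; false; true; false]; split; first exact: cycle_id.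
  move=> A M; rewrite /= !mulr1 -!mulrA g1x r1K r0K g2x r0K r1K rel_r0r0 mulr1 //.
- exists [::]; split; first by rewrite /= inE.
  move=> A M; rewrite (@nf_eq A M _ [:: true; false; true; false; true]) //.
  by rewrite /= !mulr1 -!mulrA h1 r0K r1e1 -h1 r1K.
- exists [:: false; true; false; true; false]; split; first exact: cycle_id.
  move=> A M; rewrite /= !mulr1 -!mulrA r1e1 g1x r1K r0K g2x r0K r1K rel_r0r0 mulr1 //.
- exists [::]; split; first by rewrite /= inE.
  move=> A M; rewrite (@nf_eq A M _ [:: true; false; true; false; true; false]) //.
  by rewrite /= !mulr1 -!mulrA rel_r0e0 h1 r0K r1e1 -h1 r1K.
- exists [::]; split; first exact: group1.
  move=> A M; rewrite (@nf_eq A M _ [:: true]) //.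
  by rewrite /= !mulr1 rel_r1e1.
Qed.


Theorem lemma9p5 :
  forall D : bool -> {set {perm G2root}},
  (forall i : bool, left_coset_reps (D i) (Nstab i)) ->
  forall (r : seq bool) (i : bool),
  exists a b : seq bool,
    [/\ wordW a \in D i, wordW b \in Kgrp i &
      forall (A : pzRingType) (M : BrG2model A),
        evalw M r * egen M i = evalw M a * egen M i * evalw M b].
Proof.
move=> D hD r i.
have := hD i; rewrite /left_coset_reps /is_transversal => /and3P [_ sDW /forall_inP HB].
have Bin : (Nstab i :* wordW r)%g \in rcosets (Nstab i) WG2.
  by apply/rcosetsP; exists (wordW r) => //; exact: wordW_in.
have /cards1P [d Ed] := HB _ Bin.
have : d \in (D i :&: (Nstab i :* wordW r))%g by rewrite Ed set11.
rewrite inE => /andP [dD /rcosetP [n nN dE]].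
have nW : n \in WG2 by move: nN; rewrite inE => /andP [].
have nP : pact n (beta i) == beta i by move: nN; rewrite inE => /andP [].
have [m mE] := WG2_word _ nW.
have [a aE] := WG2_word _ (subsetP sDW _ dD).
have nP' : pact (wordW m) (beta i) == beta i by rewrite mE.
have [b [Kb Eb]] := @case_lemma m i nP'.
exists a, b; split => //; first by rewrite aE.
move=> A M.
have : wordW a = wordW (r ++ m) by rewrite wordW_cat aE dE mE.
rewrite (wordW_nf a) (wordW_nf (r ++ m)) => /nfw_inj E.
rewrite (@nf_eq A M a (r ++ m)); last by apply: E; apply: nf_in.
by rewrite evalw_cat -[in LHS](Eb A M) !mulrA.
Qed.
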